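(* In the setting below, suppose $I+M(n,m)$ is invertible for all $(n,m)\in\mathbb{Z}^2$. Then $w=c\,(I+M)^{-1}r$ satisfies the lattice potential KdV equation $$(p+q+w-\hat{\tilde w})(p-q+\hat w-\tilde w)=p^2-q^2\quad\text{for all }(n,m).$$
   Context: Setting: $p,q\in\mathbb{C}$; $\tilde f(n,m)=f(n+1,m)$, $\hat f(n,m)=f(n,m+1)$, $\hat{\tilde f}(n,m)=f(n+1,m+1)$. $\Gamma=\mathrm{Diag}(\mathrm{Diag}(k_1,\dots,k_{N_1}),\Gamma_J^{[N_2]}(\kappa_2),\dots,\Gamma_J^{[N_s]}(\kappa_s))$ with $\Gamma^{[N]}_J(\kappa)$ the $N\times N$ matrix with $\kappa$ on the diagonal and $1$ on the subdiagonal; all eigenvalues $\lambda,\mu$ of $\Gamma$ satisfy $\lambda+\mu\ne0$, and $p,q\notin\{\pm\lambda\}$. $c=(c^{(1)},\dots,c^{(s)})$ a constant row vector (block lengths $N_1,\dots,N_s$). With $\rho(k)=\big(\tfrac{p+k}{p-k}\big)^n\big(\tfrac{q+k}{q-k}\big)^m\rho^0$ and $\rho_i=\rho(k_i)$: $r=(\rho_1,\dots,\rho_{N_1},r_J(\kappa_2),\dots,r_J(\kappa_s))^T$, $r_J(\kappa)=(\partial_k^l\rho/l!|_{k=\kappa})_{l=0}^{N_j-1}$; $M=\mathcal{A}FGH$ where $F=\mathrm{Diag}(\rho_1,\dots,\rho_{N_1},F_J(\kappa_2),\dots)$ with $F_J(\kappa)$ lower triangular, $(i,j)$ entry $\partial_k^{i-j}\rho|_{\kappa}/(i-j)!$;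 $H=\mathrm{Diag}(c_1,\dots,c_{N_1},H_J(c^{(2)}),\dots)$ with $H_J(d)$ having $(i,j)$ entry $d_{i+j-1}$ if $i+j-1\le N_j$ else $0$; $G$ symmetric block matrix with $G_{1,1}=(1/(k_i+k_j))$, $G_{1,j}$ with $(l,t)$ entry $-(-1/(k_l+\kappa_j))^t$, $G_{i,j}$ ($1<i\le j$) with $(l,t)$ entry $\binom{l+t-2}{l-1}(-1)^{l+t}/(\kappa_i+\kappa_j)^{l+t-1}$; and $r$ is replaced by $\mathcal{A}r$, where $\mathcal{A}=\mathrm{Diag}(I_{N_1},\mathcal{A}_2,\dots,\mathcal{A}_s)$, each $\mathcal{A}_j$ a constant lower triangular Toeplitz matrix. *)

(* Defs.v *)
From HB Require Import structures.
From mathcomp Require Import all_boot all_order all_algebra.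
Set Implicit Arguments. Unset Strict Implicit. Unset Printing Implicit Defensive.
Import Order.TTheory GRing.Theory Num.Theory.
Local Open Scope ring_scope.

Section LPKdV.
Variable C : numClosedFieldType.

Definition rho (p q : C) (n m : int) (rho0 k : C) : C :=
  ((p + k) / (p - k)) ^ n * ((q + k) / (q - k)) ^ m * rho0.

(* ((p+X)/(p-X))^n as a pair (numerator, denominator) of polynomials in X *)
Definition pw_pair (p : C) (n : int) : {poly C} * {poly C} :=
  match n with
  | Posz a => ((p%:P + 'X) ^+ a, (p%:P - 'X) ^+ a)
  | Negz b => ((p%:P - 'X) ^+ b.+1, (p%:P + 'X) ^+ b.+1)
  end.

Definition rho_frac (p q : C) (n m : int) (rho0 : C) : {poly C} * {poly C} :=
  ((pw_pair p n).1 * (pw_pair q m).1 * rho0%:P,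
   (pw_pair p n).2 * (pw_pair q m).2).

Definition frac_deriv (f : {poly C} * {poly C}) : {poly C} * {poly C} :=
  (f.1^`() * f.2 - f.1 * f.2^`(), f.2 ^+ 2).

Definition rho_taylor (p q : C) (n m : int) (rho0 kappa : C) (l : nat) : C :=
  let f := iter l frac_deriv (rho_frac p q n m rho0) in
  f.1.[kappa] / f.2.[kappa] / (l`!)%:R.

(* Blocks (all indices below are 0-based; the paper's are 1-based).    *)

Definition jordanJ (N : nat) (kappa : C) : 'M[C]_N :=
  \matrix_(i, j) (if i == j :> nat then kappa
                  else if i == j.+1 :> nat then 1 else 0).

Definition toeplitzL (N : nat) (a : nat -> C) : 'M[C]_N :=
  \matrix_(i, j) (if (j <= i)%N then a (i - j)%N else 0).

Definition FJ p q n m rho0 (N : nat) (kappa : C) : 'M[C]_N :=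
  \matrix_(i, j) (if (j <= i)%N then rho_taylor p q n m rho0 kappa (i - j) else 0).

Definition rJ p q n m rho0 (N : nat) (kappa : C) : 'cV[C]_N :=
  \col_(i < N) rho_taylor p q n m rho0 kappa i.

Definition HJ (N : nat) (d : nat -> C) : 'M[C]_N :=
  \matrix_(i, j) (if (i + j < N)%N then d (i + j)%N else 0).

(* G_{1,j}: (l,t) entry -(-1/(k_l+kappa))^t  (t 1-based) *)
Definition G1J (N1 : nat) (k : 'I_N1 -> C) (N : nat) (kappa : C) : 'M[C]_(N1, N) :=
  \matrix_(l, t) (- (- (k l + kappa)^-1) ^+ t.+1).

(* G_{i,j}: (l,t) entry binom(l+t-2,l-1)(-1)^(l+t)/(kappa_i+kappa_j)^(l+t-1) *)
Definition GJJ (Ni Nj : nat) (ki kj : C) : 'M[C]_(Ni, Nj) :=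
  \matrix_(l, t) ('C(l + t, l)%:R * (-1) ^+ (l + t)%N / (ki + kj) ^+ (l + t)%N.+1).

Section Objects.
Variables (N1 : nat) (k c1 : 'I_N1 -> C).
Variables (s : nat) (Nj : 'I_s -> nat) (kap : 'I_s -> C) (cJ aJ : 'I_s -> nat -> C).

Definition Ntot := (N1 + \sum_(j < s) Nj j)%N.

Definition Gamma : 'M[C]_Ntot :=
  block_mx (diag_mx (\row_i k i)) 0 0 (mxdiag (fun j => jordanJ (Nj j) (kap j))).

Definition Amat : 'M[C]_Ntot :=
  block_mx 1%:M 0 0 (mxdiag (fun j => toeplitzL (Nj j) (aJ j))).

Definition Fmat p q n m rho0 : 'M[C]_Ntot :=
  block_mx (diag_mx (\row_i rho p q n m rho0 (k i))) 0 0
           (mxdiag (fun j => FJ p q n m rho0 (Nj j) (kap j))).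

Definition Hmat : 'M[C]_Ntot :=
  block_mx (diag_mx (\row_i c1 i)) 0 0 (mxdiag (fun j => HJ (Nj j) (cJ j))).

Definition G11 : 'M[C]_N1 := \matrix_(i, j) (k i + k j)^-1.
Definition G1 : 'M[C]_(N1, \sum_(j < s) Nj j) :=
  \mxrow_j G1J k (Nj j) (kap j).
Definition Gmat : 'M[C]_Ntot :=
  block_mx G11 G1 G1^T (\mxblock_(i, j) GJJ (Nj i) (Nj j) (kap i) (kap j)).

Definition Mmat p q n m rho0 : 'M[C]_Ntot :=
  Amat *m Fmat p q n m rho0 *m Gmat *m Hmat.

Definition rvec0 p q n m rho0 : 'cV[C]_Ntot :=
  col_mx (\col_i rho p q n m rho0 (k i))
         (\mxcol_j rJ p q n m rho0 (Nj j) (kap j)).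
Definition rvec p q n m rho0 : 'cV[C]_Ntot := Amat *m rvec0 p q n m rho0.

Definition cvec : 'rV[C]_Ntot :=
  row_mx (\row_i c1 i) (\mxrow_j (\row_(l < Nj j) cJ j l)).

Definition wsol p q rho0 (n m : int) : C :=
  (cvec *m invmx (1%:M + Mmat p q n m rho0) *m rvec p q n m rho0) 0 0.

End Objects.
End LPKdV.

(* Main.v *)
Require Import Defs.
From HB Require Import structures.
From mathcomp Require Import all_boot all_order all_algebra.
From mathcomp Require Import ring.
Import Order.TTheory GRing.Theory Num.Theory.
Local Open Scope ring_scope.

Set Implicit Arguments. Unset Strict Implicit. Unset Printing Implicit Defensive.

Lemma step (F : fieldType) N (K : 'M[F]_N) (c : 'rV_N) (p : F) (X X' : 'M_N) (r r' : 'cV_N) :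
 X \in unitmx -> X' \in unitmx ->
 (p%:M - K) *m X' = X *m (p%:M - K) + r *m c ->
 X' *m (p%:M + K) = (p%:M + K) *m X + r' *m c ->
 (p%:M + K) *m r = (p%:M - K) *m r' ->
 p *: (c *m invmx X *m r) + c *m invmx X *m K *m r
   = p *: (c *m invmx X' *m r') - c *m K *m invmx X' *m r'
     + (c *m invmx X *m r) *m (c *m invmx X' *m r')
 /\ p *: (c *m invmx X *m r) + c *m K *m invmx X *m r
   = p *: (c *m invmx X' *m r') - c *m invmx X' *m K *m r'
     + (c *m invmx X' *m r') *m (c *m invmx X *m r).
Proof.
move=> uX uX' H1 H2 H3.
have E1 : invmx X *m (p%:M - K) = (p%:M - K) *m invmx X' + invmx X *m r *m (c *m invmx X').
  have := congr1 (fun Y => invmx X *m Y *m invmx X') H1 => /=.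
  rewrite -!mulmxA (mulmxV uX') mulmx1 mulmxDl mulmxDr !mulmxA (mulVmx uX) mul1mx.
  by rewrite -!mulmxA.
have E2 : (p%:M + K) *m invmx X = invmx X' *m (p%:M + K) + invmx X' *m r' *m (c *m invmx X).
  have := congr1 (fun Y => invmx X' *m Y *m invmx X) H2 => /=.
  rewrite !mulmxA (mulVmx uX') mul1mx mulmxDr mulmxDl !mulmxA -(mulmxA _ X) (mulmxV uX) mulmx1.
  by rewrite -!mulmxA.
have assoc4 : forall m1 m2 m3 m4 m5 (A : 'M[F]_(m1,m2)) (B : 'M_(m2,m3)) (C : 'M_(m3,m4)) (D : 'M_(m4,m5)),
  A *m (B *m C) *m D = (A *m B) *m (C *m D) by move=> *; rewrite !mulmxA.
split.
  have L : c *m (invmx X *m (p%:M - K)) *m r' = p *: (c *m invmx X *m r) + c *m invmx X *m K *m r.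
    rewrite -mulmxA -(mulmxA (invmx X)) -H3 mulmxDl mul_scalar_mx.
    by rewrite !mulmxDr -!scalemxAr !mulmxA.
  have R : c *m ((p%:M - K) *m invmx X' + invmx X *m r *m (c *m invmx X')) *m r'
     = p *: (c *m invmx X' *m r') - c *m K *m invmx X' *m r' + (c *m invmx X *m r) *m (c *m invmx X' *m r').
    rewrite mulmxDr mulmxDl mulmxBl mul_scalar_mx mulmxBr mulmxBl -scalemxAr -scalemxAl.
    by rewrite !mulmxA.
  by rewrite -L -R E1.
have L : c *m ((p%:M + K) *m invmx X) *m r = p *: (c *m invmx X *m r) + c *m K *m invmx X *m r.
  by rewrite mulmxDl mul_scalar_mx mulmxDr mulmxDl -scalemxAr -scalemxAl !mulmxA.
have R : c *m (invmx X' *m (p%:M + K) + invmx X' *m r' *m (c *m invmx X)) *m r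
     = p *: (c *m invmx X' *m r') - c *m invmx X' *m K *m r' + (c *m invmx X' *m r') *m (c *m invmx X *m r).
  rewrite mulmxDr mulmxDl -(mulmxA c (invmx X' *m (p%:M + K))) -(mulmxA (invmx X') _ r) H3 mulmxBl mul_scalar_mx mulmxBr mulmxBr.
  by rewrite -!scalemxAr !mulmxA.
by rewrite -L -R E2.
Qed.

Lemma e11_mul (F : fieldType) (A B : 'M[F]_1) : (A *m B) 0 0 = A 0 0 * B 0 0.
Proof. by rewrite mxE big_ord1. Qed.

Lemma e11_add (F : fieldType) (A B : 'M[F]_1) : (A + B) 0 0 = A 0 0 + B 0 0.
Proof. by rewrite mxE. Qed.
Lemma e11_sub (F : fieldType) (A B : 'M[F]_1) : (A - B) 0 0 = A 0 0 - B 0 0.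
Proof. by rewrite !mxE. Qed.
Lemma e11_opp (F : fieldType) (A : 'M[F]_1) : (- A) 0 0 = - A 0 0.
Proof. by rewrite mxE. Qed.
Lemma e11_scale (F : fieldType) a (A : 'M[F]_1) : (a *: A) 0 0 = a * A 0 0.
Proof. by rewrite mxE. Qed.

Lemma step_sc (F : fieldType) N (K : 'M[F]_N) (c : 'rV_N) (p : F) (X X' : 'M_N) (r r' : 'cV_N) :
 X \in unitmx -> X' \in unitmx ->
 (p%:M - K) *m X' = X *m (p%:M - K) + r *m c ->
 X' *m (p%:M + K) = (p%:M + K) *m X + r' *m c ->
 (p%:M + K) *m r = (p%:M - K) *m r' ->
 p * (c *m invmx X *m r) 0 0 + (c *m invmx X *m K *m r) 0 0
   = p * (c *m invmx X' *m r') 0 0 - (c *m K *m invmx X' *m r') 0 0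
     + (c *m invmx X *m r) 0 0 * (c *m invmx X' *m r') 0 0
 /\ p * (c *m invmx X *m r) 0 0 + (c *m K *m invmx X *m r) 0 0
   = p * (c *m invmx X' *m r') 0 0 - (c *m invmx X' *m K *m r') 0 0
     + (c *m invmx X' *m r') 0 0 * (c *m invmx X *m r) 0 0.
Proof.
move=> uX uX' H1 H2 H3; have [h1 h2] := step uX uX' H1 H2 H3.
split.
  have := congr1 (fun M : 'M_1 => M 0 0) h1; by rewrite /= !(e11_add, e11_opp, e11_scale, e11_mul).
by have := congr1 (fun M : 'M_1 => M 0 0) h2; by rewrite /= !(e11_add, e11_opp, e11_scale, e11_mul).
Qed.

Lemma lpkdv_abs (F : fieldType) N (K : 'M[F]_N) (c : 'rV_N) (p q : F)
  (X : int -> int -> 'M[F]_N) (r : int -> int -> 'cV[F]_N) :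
 (forall n m, X n m \in unitmx) ->
 (forall n m, (p%:M - K) *m X (n+1) m = X n m *m (p%:M - K) + r n m *m c) ->
 (forall n m, X (n+1) m *m (p%:M + K) = (p%:M + K) *m X n m + r (n+1) m *m c) ->
 (forall n m, (p%:M + K) *m r n m = (p%:M - K) *m r (n+1) m) ->
 (forall n m, (q%:M - K) *m X n (m+1) = X n m *m (q%:M - K) + r n m *m c) ->
 (forall n m, X n (m+1) *m (q%:M + K) = (q%:M + K) *m X n m + r n (m+1) *m c) ->
 (forall n m, (q%:M + K) *m r n m = (q%:M - K) *m r n (m+1)) ->
 forall n m,
 let w n m := (c *m invmx (X n m) *m r n m) 0 0 in
 (p + q + w n m - w (n + 1) (m + 1)) * (p - q + w n (m + 1) - w (n + 1) m)
    = p ^+ 2 - q ^+ 2.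
Proof.
move=> U P1 P2 P3 Q1 Q2 Q3 n m w.
have [_ e3] := step_sc (U n m) (U (n+1) m) (P1 n m) (P2 n m) (P3 n m).
have [e2 _] := step_sc (U n (m+1)) (U (n+1) (m+1)) (P1 n (m+1)) (P2 n (m+1)) (P3 n (m+1)).
have [e1 _] := step_sc (U (n+1) m) (U (n+1) (m+1)) (Q1 (n+1) m) (Q2 (n+1) m) (Q3 (n+1) m).
have [_ e4] := step_sc (U n m) (U n (m+1)) (Q1 n m) (Q2 n m) (Q3 n m).
rewrite /w; move: e1 e2 e3 e4.
set W := (c *m invmx (X n m) *m r n m) 0 0.
set Wt := (c *m invmx (X (n+1) m) *m r (n+1) m) 0 0.
set Wh := (c *m invmx (X n (m+1)) *m r n (m+1)) 0 0.
set Wth := (c *m invmx (X (n+1) (m+1)) *m r (n+1) (m+1)) 0 0.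
set a := (c *m invmx (X n m) *m K *m r n m) 0 0.
set b := (c *m K *m invmx (X n m) *m r n m) 0 0.
set at1 := (c *m invmx (X (n+1) m) *m K *m r (n+1) m) 0 0.
set ah := (c *m invmx (X n (m+1)) *m K *m r n (m+1)) 0 0.
set bth := (c *m K *m invmx (X (n+1) (m+1)) *m r (n+1) (m+1)) 0 0.
move=> e1 e2 e3 e4.
apply/eqP; rewrite -subr_eq0; apply/eqP.
have z1 := e1; move/eqP: z1; rewrite -subr_eq0 => /eqP z1.
have z2 := e2; move/eqP: z2; rewrite -subr_eq0 => /eqP z2.
have z3 := e3; move/eqP: z3; rewrite -subr_eq0 => /eqP z3.
have z4 := e4; move/eqP: z4; rewrite -subr_eq0 => /eqP z4.
rewrite -[RHS](_ : - 0 + 0 + 0 - 0 = 0); last by rewrite subr0 !addr0 oppr0.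
rewrite -{1}z1 -{1}z2 -{1}z3 -z4. ring.
Qed.

Set Implicit Arguments. Unset Strict Implicit. Unset Printing Implicit Defensive.

Ltac fld := field; repeat (apply/andP; split);
  try (match goal with H : _ |- _ => exact: H end).

Section Jordan.
Variable C : numClosedFieldType.

Lemma sum_dl N (i : nat) (f : nat -> C) :
  \sum_(u < N) (i == u :> nat)%:R * f u = if (i < N)%N then f i else 0.
Proof.
elim: N => [|N IH]; first by rewrite big_ord0.
rewrite big_ord_recr /= IH ltnS.
case: (ltngtP i N) => [h|h|->]; rewrite ?mul0r ?addr0 ?mul1r ?add0r ?leqnn //.
Qed.

Lemma sum_ds N (i : nat) (f : nat -> C) :
  \sum_(u < N) (i == u.+1 :> nat)%:R * f u =
  if i is i'.+1 then (if (i' < N)%N then f i' else 0) else 0.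
Proof.
case: i => [|i].
  by rewrite big1 // => u _; rewrite mul0r.
rewrite (eq_bigr (fun u : 'I_N => (i == u :> nat)%:R * f u)) ?sum_dl // => u _.
Qed.

Lemma jordanE N (kap : C) (x y : 'I_N) :
  jordanJ N kap x y = (x == y :> nat)%:R * kap + (x == y.+1 :> nat)%:R.
Proof.
rewrite mxE; case: (eqVneq (x : nat) y) => [->|ne].
  by rewrite (ltn_eqF (ltnSn _)) mul1r addr0.
by case: (x == y.+1 :> nat); rewrite mul0r add0r.
Qed.

Lemma jl N (kap : C) m (g : nat -> 'I_m -> C) (i : 'I_N) (j : 'I_m) :
  (jordanJ N kap *m \matrix_(i < N, j < m) g i j) i j
  = kap * g i j + (if (i : nat) is i'.+1 then g i' j else 0).
Proof.
rewrite mxE; under eq_bigr do rewrite jordanE mxE mulrDl.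
rewrite big_split /=.
under eq_bigr do rewrite mulrAC.
rewrite -mulr_suml (sum_dl N i (fun u => g u j)) ltn_ord mulrC (sum_ds N i (fun u => g u j)).
by case: i => [[|i] /= hi] //; rewrite ltnW.
Qed.

Lemma jrt N (kap : C) m (g : 'I_m -> nat -> C) (i : 'I_m) (j : 'I_N) :
  (\matrix_(i < m, j < N) g i j *m (jordanJ N kap)^T) i j
  = kap * g i j + (if (j : nat) is j'.+1 then g i j' else 0).
Proof.
rewrite mxE; under eq_bigr do rewrite mxE mxE jordanE mulrDr.
rewrite big_split /=.
under eq_bigr => u _ do rewrite mulrA [g i u * _]mulrC.
under [X in _ + X = _]eq_bigr do rewrite mulrC.
rewrite -mulr_suml (sum_dl N j (fun u => g i u)) ltn_ord mulrC (sum_ds N j (fun u => g i u)).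
by case: j => [[|j] /= hj] //; rewrite ltnW.
Qed.

Lemma jr N (kap : C) m (g : 'I_m -> nat -> C) (i : 'I_m) (j : 'I_N) :
  (\matrix_(i < m, j < N) g i j *m jordanJ N kap) i j
  = kap * g i j + (if (j.+1 < N)%N then g i j.+1 else 0).
Proof.
rewrite mxE; under eq_bigr do rewrite mxE jordanE mulrDr.
rewrite big_split /=.
under eq_bigr => u _ do rewrite mulrA [g i u * _]mulrC eq_sym.
under [X in _ + X = _]eq_bigr do rewrite mulrC eq_sym.
by rewrite -mulr_suml (sum_dl N j (fun u => g i u)) ltn_ord mulrC (sum_dl N j.+1 (fun u => g i u)).
Qed.

Lemma jlt N (kap : C) m (g : nat -> 'I_m -> C) (i : 'I_N) (j : 'I_m) :
  ((jordanJ N kap)^T *m \matrix_(i < N, j < m) g i j) i j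
  = kap * g i j + (if (i.+1 < N)%N then g i.+1 j else 0).
Proof.
rewrite mxE; under eq_bigr do rewrite mxE jordanE mxE mulrDl.
rewrite big_split /=.
under eq_bigr do rewrite mulrAC eq_sym.
under [X in _ + X = _]eq_bigr do rewrite eq_sym.
by rewrite -mulr_suml (sum_dl N i (fun u => g u j)) ltn_ord mulrC (sum_dl N i.+1 (fun u => g u j)).
Qed.

Lemma addmxE' m n (A B : 'M[C]_(m,n)) i j : (A + B) i j = A i j + B i j.
Proof. by rewrite mxE. Qed.
Lemma oppmxE' m n (A : 'M[C]_(m,n)) i j : (- A) i j = - A i j.
Proof. by rewrite mxE. Qed.
Lemma submxE' m n (A B : 'M[C]_(m,n)) i j : (A - B) i j = A i j - B i j.
Proof. by rewrite !mxE. Qed.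
Lemma scalemxE' m n a (A : 'M[C]_(m,n)) i j : (a *: A) i j = a * A i j.
Proof. by rewrite mxE. Qed.

Definition lowT N (t : nat -> C) : 'M[C]_N :=
  \matrix_(i, j) (if (j <= i)%N then t (i - j)%N else 0).

Lemma jordan_lowT N (kap : C) t : jordanJ N kap *m lowT N t = lowT N t *m jordanJ N kap.
Proof.
apply/matrixP => i j.
rewrite (jl kap (fun i (j : 'I_N) => if (j <= i)%N then t (i - j)%N else 0)).
rewrite (jr kap (fun (i : 'I_N) j => if (j <= i)%N then t (i - j)%N else 0)).
congr (_ + _).
case: i => [[|i] hi] /=.
  by case: ifP.
case: ifP => hj.
  by rewrite (@leq_ltn_trans i.+1).
by case: ifP.
Qed.
Lemma toeplitz_lowT N a : toeplitzL N a = lowT N a.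
Proof. by []. Qed.

Lemma FJ_lowT (p q : C) n m rho0 N kap : FJ p q n m rho0 N kap = lowT N (rho_taylor p q n m rho0 kap).
Proof. by []. Qed.

Lemma lowT_shift N (kap p : C) t t' :
  (forall l, (p - kap) * t' l - (if l is l'.+1 then t' l' else 0)
             = (p + kap) * t l + (if l is l'.+1 then t l' else 0)) ->
  (p%:M - jordanJ N kap) *m lowT N t' = (p%:M + jordanJ N kap) *m lowT N t.
Proof.
move=> ht; apply/matrixP => i j.
rewrite mulmxBl mulmxDl !mul_scalar_mx submxE' addmxE' !scalemxE'.
rewrite (jl kap (fun i (j : 'I_N) => if (j <= i)%N then t' (i - j)%N else 0)).
rewrite (jl kap (fun i (j : 'I_N) => if (j <= i)%N then t (i - j)%N else 0)).
rewrite !mxE.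
case: i => [[|i] hi] /=.
  case: ifP => _; last by rewrite !mulr0 !addr0 subr0.
  by have := ht 0%N; rewrite /= subr0 addr0 sub0n !addr0 -mulrBl -mulrDl => ->.
case: (ltngtP j i.+1) => hj.
- have hj' : (j <= i)%N by rewrite -ltnS.
  rewrite hj' subSn //; have /= h := ht (i - j).+1.
  transitivity ((p - kap) * t' (i - j).+1 - t' (i - j)%N); first by ring.
  by rewrite h; ring.
- have hj' : (j <= i)%N = false by rewrite leqNgt (ltnW hj).
  by rewrite hj'; ring.
- rewrite hj ltnn subnn.
  by have := ht 0%N; rewrite /= subr0 addr0 !addr0 -mulrBl -mulrDl => ->.
Qed.

Lemma hankel_comm N (kap : C) d : (jordanJ N kap)^T *m HJ N d = HJ N d *m jordanJ N kap.
Proof.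
apply/matrixP => i j.
rewrite (jlt kap (fun i (j : 'I_N) => if (i + j < N)%N then d (i + j)%N else 0)).
rewrite (jr kap (fun (i : 'I_N) j => if (i + j < N)%N then d (i + j)%N else 0)).
congr (_ + _).
rewrite addSn addnS.
case: (ltnP (i + j).+1 N) => h.
  by rewrite (leq_ltn_trans _ h) ?(leq_ltn_trans _ h) ?ltnS ?leq_addr ?leq_addl.
by case: ifP; case: ifP.
Qed.

Definition ecol N : 'cV[C]_N := \col_(l < N) (l == 0 :> nat)%:R.

Lemma G1J_eq N1 (k : 'I_N1 -> C) N (kap : C) :
  (forall l : 'I_N1, (0 < N)%N -> k l + kap != 0) ->
  diag_mx (\row_i k i) *m G1J k N kap + G1J k N kap *m (jordanJ N kap)^T
  = const_mx 1 *m (ecol N)^T.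
Proof.
move=> hs; apply/matrixP => l t.
rewrite addmxE' mul_diag_mx.
rewrite (jrt kap (fun l (t : nat) => - (- (k l + kap)^-1) ^+ t.+1)).
rewrite !mxE big_ord1 !mxE mul1r.
have s0 : k l + kap != 0 by apply: hs; apply: (leq_ltn_trans _ (ltn_ord t)).
move: s0; case: t => [[|t] ht] /=; move: (k l) => a s0.
  by rewrite expr1 opprK; field.
rewrite !exprS; move: (_ ^+ t) => e; by field.
Qed.

Lemma GJJ_eq Ni Nj (ki kj : C) : ki + kj != 0 ->
  jordanJ Ni ki *m GJJ Ni Nj ki kj + GJJ Ni Nj ki kj *m (jordanJ Nj kj)^T
  = ecol Ni *m (ecol Nj)^T.
Proof.
move=> s0; apply/matrixP => l t.
rewrite addmxE'.
rewrite (jl ki (fun (l : nat) (t : 'I_Nj) => 'C(l + t, l)%:R * (-1) ^+ (l + t)%N / (ki + kj) ^+ (l + t)%N.+1)).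
rewrite (jrt kj (fun (l : 'I_Ni) (t : nat) => 'C(l + t, l)%:R * (-1) ^+ (l + t)%N / (ki + kj) ^+ (l + t)%N.+1)).
rewrite !mxE big_ord1 !mxE.
move: s0; case: l => [[|l] hl]; case: t => [[|t] ht] /=; move=> s0.
- rewrite add0n !bin0 expr0 expr1 !mul1r.
  by field; exact: s0.
- rewrite !add0n !bin0 !mul1r addr0 !exprS.
  have St : (ki + kj) ^+ t != 0 by rewrite expf_neq0.
  move: St; move: ((-1) ^+ t) ((ki + kj) ^+ t) => e T St. by fld.
-
  rewrite !addn0 !binn !mul1r addr0 !exprS.
  have St : (ki + kj) ^+ l != 0 by rewrite expf_neq0.
  move: St; move: ((-1) ^+ l) ((ki + kj) ^+ l) => e T St. by fld.
- rewrite !addSn !addnS !binS !natrD !exprS.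
  have St : (ki + kj) ^+ (l + t) != 0 by rewrite expf_neq0.
  move: St; move: ((-1) ^+ (l + t)) ((ki + kj) ^+ (l + t)) => e T St.
  by fld.
Qed.

End Jordan.

Set Implicit Arguments. Unset Strict Implicit. Unset Printing Implicit Defensive.

Section Taylor.
Variable C : numClosedFieldType.
Implicit Types (f g : {poly C} * {poly C}).

Definition feq f g := f.1 * g.2 = g.1 * f.2.

Lemma D_feq f g : feq f g -> feq (frac_deriv f) (frac_deriv g).
Proof.
rewrite /feq /frac_deriv /=; case: f g => [a b] [c d] /= h.
have h0 : a * d - c * b = 0 by rewrite h subrr.
have h1 : a^`() * d + a * d^`() - (c^`() * b + c * b^`()) = 0.
  by rewrite -!derivM -derivB h0 deriv0.
apply/eqP; rewrite -subr_eq0; apply/eqP.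
transitivity (b * d * (a^`() * d + a * d^`() - (c^`() * b + c * b^`()))
   - (b^`() * d + b * d^`()) * (a * d - c * b)); first by ring.
by rewrite h0 h1; ring.
Qed.

Lemma iter_feq l f g : feq f g -> feq (iter l (@frac_deriv C) f) (iter l (@frac_deriv C) g).
Proof. by elim: l => [|l IH] //= /IH; apply: D_feq. Qed.

Lemma iter_den l f : (iter l (@frac_deriv C) f).2 = f.2 ^+ (2 ^ l).
Proof. by elim: l => [|l IH] //=; rewrite IH -exprM expnS mulnC. Qed.

Definition fval (x : C) f := f.1.[x] / f.2.[x].

Lemma fval_feq x f g : feq f g -> f.2.[x] != 0 -> g.2.[x] != 0 -> fval x f = fval x g.
Proof.
move=> h nf ng; rewrite /fval; apply/eqP; rewrite eqr_div //.
by have := congr1 (horner^~ x) h; rewrite /= !hornerM => ->.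
Qed.

Definition Pf (P : {poly C}) f := (P * f.1, f.2).

Lemma D_P (P : {poly C}) c0 f : P^`() = c0%:P -> forall l,
  iter l.+1 (@frac_deriv C) (Pf P f) =
   (P * (iter l.+1 (@frac_deriv C) f).1
      + ((l.+1)%:R * c0)%:P * ((iter l (@frac_deriv C) f).1 * (iter l (@frac_deriv C) f).2),
    (iter l.+1 (@frac_deriv C) f).2).
Proof.
move=> dP; elim=> [|l IH].
  rewrite /= /frac_deriv /Pf /=; congr (_, _).
  by rewrite derivM dP mul1r; ring.
rewrite iterS IH.
rewrite [in RHS]iterS.
set A0 := (iter l (@frac_deriv C) f).1.
set B0 := (iter l (@frac_deriv C) f).2.
have -> : iter l.+1 (@frac_deriv C) f = frac_deriv (A0, B0) by rewrite /= -surjective_pairing.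
rewrite /frac_deriv /=.
set A1 := A0^`() * B0 - A0 * B0^`().
have eA : A1 = A0^`() * B0 - A0 * B0^`() by [].
clearbody A1.
congr (_, _).
rewrite !derivM !derivD !derivM derivC dP !mul0r !add0r.
move: (A1^`()) => d1.
rewrite eA -!natr1 !mulrDl !rmorphD /= mul1r.
ring.
Qed.

Lemma fval_P (P : {poly C}) c0 f x : P^`() = c0%:P -> f.2.[x] != 0 -> forall l,
 fval x (iter l.+1 (@frac_deriv C) (Pf P f))
   = P.[x] * fval x (iter l.+1 (@frac_deriv C) f) + (l.+1)%:R * c0 * fval x (iter l (@frac_deriv C) f).
Proof.
move=> dP nf l; rewrite (D_P f dP) /fval.
have nB : (iter l (@frac_deriv C) f).2.[x] != 0 by rewrite iter_den horner_exp expf_neq0.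
rewrite iterS; move: nB; set F := iter l (@frac_deriv C) f => nB.
rewrite /frac_deriv /=.

rewrite !(hornerD, hornerM, hornerN, hornerC).
move: nB; move: (F.2.[x]) (F.1.[x]) ((F.1)^`().[x]) ((F.2)^`().[x]) (P.[x]) => b a a1 b1 pp nb.
by field.
Qed.

Lemma fval_P0 (P : {poly C}) f x : fval x (Pf P f) = P.[x] * fval x f.
Proof. by rewrite /fval /Pf /= hornerM mulrA. Qed.

Lemma int_succ_cases (n : int) :
  (exists a : nat, n = Posz a /\ n + 1 = Posz a.+1) \/
  (n = Negz 0 /\ n + 1 = Posz 0) \/
  (exists b : nat, n = Negz b.+1 /\ n + 1 = Negz b).
Proof.
case: n => [a|[|b]].
- by left; exists a; rewrite -addn1.
- by right; left.
- right; right; exists b; split => //.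
  by rewrite !NegzE -[b.+2]addn1 PoszD opprD -addrA addNr addr0.
Qed.

Lemma pw_shift (p : C) n :
  (p%:P - 'X) * (pw_pair p (n + 1)).1 * (pw_pair p n).2
  = (p%:P + 'X) * (pw_pair p n).1 * (pw_pair p (n + 1)).2.
Proof.
have [[a [-> ->]]|[[-> ->]|[b [-> ->]]]] := int_succ_cases n; rewrite /= ?exprS; ring.
Qed.

Lemma rho_frac_shift (p q : C) n m rho0 :
  feq (Pf (p%:P - 'X) (rho_frac p q (n+1) m rho0)) (Pf (p%:P + 'X) (rho_frac p q n m rho0)).
Proof.
rewrite /feq /Pf /rho_frac /=.
have := pw_shift p n.
move: (pw_pair p (n+1)) (pw_pair p n) (pw_pair q m) => [a b] [c d] [e f] /= h.
transitivity ((p%:P - 'X) * a * d * (e * rho0%:P * f)); first by ring.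
rewrite h; ring.
Qed.

Lemma pw_den (p x : C) n : p - x != 0 -> p + x != 0 -> (pw_pair p n).2.[x] != 0.
Proof.
move=> h1 h2; case: n => [a|b] /=; rewrite horner_exp expf_neq0 //.
  by rewrite !(hornerD, hornerN, hornerC, hornerX).
by rewrite !(hornerD, hornerN, hornerC, hornerX).
Qed.

Lemma rho_frac_den (p q x : C) n m rho0 : p - x != 0 -> p + x != 0 -> q - x != 0 -> q + x != 0 ->
  (rho_frac p q n m rho0).2.[x] != 0.
Proof.
by move=> *; rewrite /rho_frac /= hornerM mulf_neq0 // pw_den.
Qed.

Lemma rho_frac_sym (p q : C) n m rho0 : rho_frac p q n m rho0 = rho_frac q p m n rho0.
Proof. by rewrite /rho_frac [_ * (pw_pair q m).1]mulrC [_ * (pw_pair q m).2]mulrC. Qed.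

Lemma rho_taylor_sym (p q : C) n m rho0 : rho_taylor p q n m rho0 = rho_taylor q p m n rho0.
Proof. by rewrite /rho_taylor rho_frac_sym. Qed.

Lemma rho_sym (p q : C) n m rho0 x : rho p q n m rho0 x = rho q p m n rho0 x.
Proof. by rewrite /rho [_ ^ n * _]mulrC. Qed.

Lemma rho_taylor_shift (p q x : C) n m rho0 l :
  p - x != 0 -> p + x != 0 -> q - x != 0 -> q + x != 0 ->
  (p - x) * rho_taylor p q (n+1) m rho0 x l
    - (if l is l'.+1 then rho_taylor p q (n+1) m rho0 x l' else 0)
  = (p + x) * rho_taylor p q n m rho0 x l
    + (if l is l'.+1 then rho_taylor p q n m rho0 x l' else 0).
Proof.
move=> h1 h2 h3 h4.
have eT : forall n0 l0, rho_taylor p q n0 m rho0 x l0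
   = fval x (iter l0 (@frac_deriv C) (rho_frac p q n0 m rho0)) / (l0`!)%:R by [].
have d0 := rho_frac_den n m rho0 h1 h2 h3 h4.
have d1 := rho_frac_den (n+1) m rho0 h1 h2 h3 h4.
have E := @fval_feq x _ _ (iter_feq l (rho_frac_shift p q n m rho0)).
rewrite !iter_den /= !horner_exp in E.
have {E} := E (expf_neq0 _ d1) (expf_neq0 _ d0).
have dm : (p%:P - 'X)^`() = (-1)%:P by rewrite derivB derivC derivX sub0r polyCN.
have dp : (p%:P + 'X)^`() = 1%:P by rewrite derivD derivC derivX add0r.
have hm : (p%:P - 'X).[x] = p - x by rewrite hornerD hornerN hornerC hornerX.
have hp : (p%:P + 'X).[x] = p + x by rewrite hornerD hornerC hornerX.
case: l => [|l].
  by rewrite /= !fval_P0 hm hp !eT /= !divr1 subr0 addr0.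
rewrite (fval_P dm d1) (fval_P dp d0) hm hp !eT factS natrM.
have nf : (l`!)%:R != 0 :> C by rewrite pnatr_eq0 -lt0n fact_gt0.
have nl : (l.+1)%:R != 0 :> C by rewrite pnatr_eq0.
move: nf nl.
move: (fval x _) (fval x _) (fval x _) (fval x _) ((l`!)%:R : C) ((l.+1)%:R : C) => a b c d F L nF nL E.
apply/eqP; rewrite -subr_eq0; apply/eqP.
transitivity (((p - x) * d + L * -1 * c - ((p + x) * b + L * 1 * a)) / (L * F)).
  by field; rewrite nF nL.
by rewrite E subrr mul0r.
Qed.

Lemma rho_shift (p q x : C) n m rho0 : p - x != 0 -> p + x != 0 ->
  (p - x) * rho p q (n+1) m rho0 x = (p + x) * rho p q n m rho0 x.
Proof.
move=> h1 h2; rewrite /rho exprzDr ?expr1z; last by rewrite unitfE mulf_neq0 ?invr_eq0.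
move: (_ ^ n) (_ ^ m) => u v; by field.
Qed.

End Taylor.

Set Implicit Arguments. Unset Strict Implicit. Unset Printing Implicit Defensive.

Lemma H12 (F : fieldType) N (K M M' : 'M[F]_N) (r r' : 'cV_N) (c : 'rV_N) (p : F) :
  K *m M + M *m K = r *m c -> K *m M' + M' *m K = r' *m c ->
  (p%:M - K) *m M' = (p%:M + K) *m M ->
  (p%:M - K) *m (1%:M + M') = (1%:M + M) *m (p%:M - K) + r *m c /\
  (1%:M + M') *m (p%:M + K) = (p%:M + K) *m (1%:M + M) + r' *m c.
Proof.
move=> S S' E.
have gen : forall x y z w : 'M[F]_N, x + (y + z) = x + (y - w) + (z + w).
  by move=> x y z w; rewrite -addrA addrACA addNr addr0.
split.
  rewrite mulmxDr mulmx1 E mulmxDl mul1mx -S mulmxDl mulmxBr scalar_mxC !mul_scalar_mx.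
  exact: gen.
rewrite mulmxDl mul1mx mulmxDr mulmx1 -S' mulmxDr -E mulmxBl scalar_mxC !mul_scalar_mx.
by rewrite [K *m M' + _]addrC; apply: gen.
Qed.

Section Main.
Variable C : numClosedFieldType.
Variables (N1 : nat) (k c1 : 'I_N1 -> C) (s : nat) (Nj : 'I_s -> nat) (kap : 'I_s -> C) (cJ aJ : 'I_s -> nat -> C).

Lemma mxdiag_mul (A B : forall j, 'M[C]_(Nj j)) :
  mxdiag A *m mxdiag B = mxdiag (fun j => A j *m B j).
Proof.
rewrite {2}/mxdiag mul_mxdiag_mxblock /mxdiag; apply/eq_mxblock => i j.
by case: eqVneq => [<-|_]; rewrite ?conform_mx_id ?mulmx0.
Qed.

Lemma GA : Gamma k Nj kap *m Amat N1 Nj aJ = Amat N1 Nj aJ *m Gamma k Nj kap.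
Proof.
rewrite /Gamma /Amat !mulmx_block !mulmx0 !mul0mx !addr0 !add0r mulmx1 mul1mx !mxdiag_mul.
congr block_mx; apply/eq_mxdiag => j.
by rewrite toeplitz_lowT jordan_lowT.
Qed.

Lemma GF p q n m rho0 : Gamma k Nj kap *m Fmat k Nj kap p q n m rho0 = Fmat k Nj kap p q n m rho0 *m Gamma k Nj kap.
Proof.
rewrite /Gamma /Fmat !mulmx_block !mulmx0 !mul0mx !addr0 !add0r !mxdiag_mul.
congr block_mx.
  apply/matrixP => i j; rewrite mul_diag_mx mul_mx_diag !mxE.
  by case: eqP => [->|]; rewrite ?mulr1n ?mulr0n ?mulr0 ?mul0r // mulrC.
apply/eq_mxdiag => j.
by rewrite FJ_lowT jordan_lowT.
Qed.

Lemma FS p q n m rho0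
  (hk : forall i, [/\ p - k i != 0, p + k i != 0, q - k i != 0 & q + k i != 0])
  (hj : forall j, (0 < Nj j)%N -> [/\ p - kap j != 0, p + kap j != 0, q - kap j != 0 & q + kap j != 0]) :
  (p%:M - Gamma k Nj kap) *m Fmat k Nj kap p q (n+1) m rho0
  = (p%:M + Gamma k Nj kap) *m Fmat k Nj kap p q n m rho0.
Proof.
rewrite /Gamma /Fmat (scalar_mx_block N1 (\sum_(j < s) Nj j) p) opp_block_mx !add_block_mx.
rewrite !mulmx_block !(mulmx0, mul0mx, addr0, add0r, oppr0, subr0).
congr block_mx.
  apply/matrixP => i j; rewrite mulmxDl mulmxDl mul_scalar_mx mul_scalar_mx mulNmx.
  rewrite !addmxE' !oppmxE' !scalemxE' !mul_diag_mx !mxE.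
  case: eqP => [->|]; rewrite ?mulr1n ?mulr0n ?mulr0 ?mul0r ?oppr0 ?addr0 //.
  have [h1 h2 _ _] := hk j.
  by transitivity ((p - k j) * rho p q (n + 1) m rho0 (k j)); [ring | rewrite rho_shift //; ring].
rewrite -mxdiagZ -mxdiagN -mxdiagD -mxdiagD !mxdiag_mul.
apply/eq_mxdiag => j; apply/matrixP => a b.
have pos : (0 < Nj j)%N by apply: leq_ltn_trans _ (ltn_ord a).
have [h1 h2 h3 h4] := hj j pos.
rewrite !FJ_lowT (@lowT_shift C (Nj j) (kap j) p (rho_taylor p q n m rho0 (kap j)) (rho_taylor p q (n+1) m rho0 (kap j))) //.
by move=> l; apply: rho_taylor_shift.
Qed.

Definition evec : 'cV[C]_(Ntot N1 Nj) :=
  col_mx (const_mx 1) (mxcol (fun j => ecol C (Nj j))).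

Lemma GH : (Gamma k Nj kap)^T *m Hmat c1 Nj cJ = Hmat c1 Nj cJ *m Gamma k Nj kap.
Proof.
rewrite /Gamma /Hmat tr_block_mx !trmx0 tr_diag_mx tr_mxdiag.
rewrite !mulmx_block !(mulmx0, mul0mx, addr0, add0r) !mxdiag_mul.
congr block_mx.
  apply/matrixP => i j; rewrite mul_diag_mx mul_mx_diag !mxE.
  by case: eqP => [->|]; rewrite ?mulr1n ?mulr0n ?mulr0 ?mul0r // mulrC.
by apply/eq_mxdiag => j; rewrite hankel_comm.
Qed.

Lemma Fe p q n m rho0 : Fmat k Nj kap p q n m rho0 *m evec = rvec0 k Nj kap p q n m rho0.
Proof.
rewrite /Fmat /evec /rvec0 mul_block_col !(mulmx0, mul0mx, addr0, add0r).
congr col_mx.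
  by apply/matrixP => i j; rewrite mul_diag_mx !mxE mulr1.
rewrite mul_mxdiag_mxcol; apply/eq_mxcol => j; apply/matrixP => i z.
rewrite !mxE (ord1 z).
under eq_bigr do rewrite !mxE mulrC eq_sym.
rewrite (sum_dl (Nj j) 0 (fun u => if (u <= i)%N then rho_taylor p q n m rho0 (kap j) (i - u) else 0)).
by rewrite (leq_ltn_trans _ (ltn_ord i)) // subn0.
Qed.

Lemma eH : evec^T *m Hmat c1 Nj cJ = cvec c1 Nj cJ.
Proof.
rewrite /Hmat /evec /cvec tr_col_mx mul_row_block !(mulmx0, mul0mx, addr0, add0r).
congr row_mx.
  by apply/matrixP => i j; rewrite mul_mx_diag !mxE mul1r.
rewrite (tr_mxcol (fun j => ecol C (Nj j))) mul_mxrow_mxdiag; apply/eq_mxrow => j; apply/matrixP => z t.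
rewrite !mxE.
under eq_bigr do rewrite !mxE eq_sym.
rewrite (sum_dl (Nj j) 0 (fun u => if (u + t < Nj j)%N then cJ j (u + t)%N else 0)).
by rewrite (leq_ltn_trans _ (ltn_ord t)) // add0n ltn_ord.
Qed.

Lemma GG2 (hkK : forall i j, (0 < Nj j)%N -> k i + kap j != 0) :
  diag_mx (\row_i k i) *m G1 k Nj kap + G1 k Nj kap *m mxdiag (fun j => (jordanJ (Nj j) (kap j))^T)
  = const_mx 1 *m (mxcol (fun j => ecol C (Nj j)))^T.
Proof.
rewrite /G1 mul_mxrow mul_mxrow_mxdiag -mxrowD (tr_mxcol (fun j => ecol C (Nj j))) mul_mxrow.
apply/eq_mxrow => j; apply: G1J_eq => i; exact: hkK.
Qed.

Lemma GG (hkk : forall i j : 'I_N1, k i + k j != 0)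
  (hkK : forall i j, (0 < Nj j)%N -> k i + kap j != 0)
  (hKK : forall i j, (0 < Nj i)%N -> (0 < Nj j)%N -> kap i + kap j != 0) :
  Gamma k Nj kap *m Gmat k Nj kap + Gmat k Nj kap *m (Gamma k Nj kap)^T = evec *m evec^T.
Proof.
rewrite /Gamma /Gmat tr_block_mx !trmx0 tr_diag_mx tr_mxdiag.
rewrite !mulmx_block !(mulmx0, mul0mx, addr0, add0r) add_block_mx /evec tr_col_mx mul_col_row.
have h2 := GG2 hkK.
congr block_mx => //.
- apply/matrixP => i j; rewrite addmxE' mul_diag_mx mul_mx_diag !mxE big_ord1 !mxE mulr1.
  have := hkk i j; move: (k i) (k j) => a b hab; by fld.
- have := congr1 trmx h2; rewrite linearD /= !trmx_mul trmxK tr_diag_mx tr_mxdiag.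
  have -> : \mxdiag_j ((jordanJ (Nj j) (kap j))^T)^T = \mxdiag_j jordanJ (Nj j) (kap j).
    by apply/eq_mxdiag => j; rewrite trmxK.
  by move=> <-; rewrite addrC.
- rewrite mul_mxdiag_mxblock mul_mxblock_mxdiag -mxblockD (tr_mxcol (fun j => ecol C (Nj j))) mul_mxcol_mxrow.
  apply/eq_mxblock => i j; apply/matrixP => a b.
  rewrite GJJ_eq //; apply: hKK.
    exact: leq_ltn_trans _ (ltn_ord a).
  exact: leq_ltn_trans _ (ltn_ord b).
Qed.

Lemma eig_k (i : 'I_N1) : eigenvalue (Gamma k Nj kap) (k i).
Proof.
apply/eigenvalueP; exists (row_mx (delta_mx 0 i) 0).
  rewrite /Gamma mul_row_block !(mulmx0, mul0mx, addr0, add0r) scale_row_mx scaler0.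
  congr row_mx; apply/matrixP => a b; rewrite mul_mx_diag !mxE (ord1 a) eqxx /=.
  by case: eqP => [->|]; rewrite ?mulr1 ?mulr0 ?mul0r // mul1r.
apply/eqP => h; have := congr1 (fun M : 'M[C]_(1, N1 + \sum_(j < s) Nj j) => M 0 (lshift (\sum_(j < s) Nj j) i)) h.
by rewrite /= row_mxEl !mxE !eqxx /= => /eqP; rewrite oner_eq0.
Qed.

Lemma eig_kap j : (0 < Nj j)%N -> eigenvalue (Gamma k Nj kap) (kap j).
Proof.
move=> pos; apply/eigenvalueP.
pose w : 'rV[C]_(\sum_(j < s) Nj j) := mxrow (fun j' => \row_(l < Nj j') ((j' == j) && (l == 0 :> nat))%:R).
exists (row_mx 0 w).
  rewrite /Gamma mul_row_block !(mulmx0, mul0mx, addr0, add0r) scale_row_mx scaler0.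
  congr row_mx; rewrite /w mul_mxrow_mxdiag -[in RHS](submxrowK (_ *: _)).
  apply/eq_mxrow => j'; rewrite -mul_scalar_mx -mul_submxrow mxrowK mul_scalar_mx.
  apply/matrixP => a b.
  rewrite (jr (kap j') (fun (_ : 'I_1) (l : nat) => ((j' == j) && (l == 0 :> nat))%:R)) !mxE.
  rewrite /= andbF if_same addr0.
  by case: (eqVneq j' j) => e; [rewrite (congr1 kap e) | rewrite /= !mulr0].
apply/eqP => h.
have : w = 0.
  by have := h; rewrite -row_mx0 => /eq_row_mx [].
move/(congr1 (fun M => submxrow M j)); rewrite /w mxrowK submxrow0 => /matrixP/(_ 0 (Ordinal pos)).
by rewrite !mxE !eqxx /= => /eqP; rewrite oner_eq0.
Qed.

Lemma commA (p : C) :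
  Amat N1 Nj aJ *m (p%:M - Gamma k Nj kap) = (p%:M - Gamma k Nj kap) *m Amat N1 Nj aJ
  /\ Amat N1 Nj aJ *m (p%:M + Gamma k Nj kap) = (p%:M + Gamma k Nj kap) *m Amat N1 Nj aJ.
Proof. by rewrite mulmxBr mulmxBl mulmxDr mulmxDl scalar_mxC GA. Qed.

Lemma Seq p q n m rho0
  (hkk : forall i j : 'I_N1, k i + k j != 0)
  (hkK : forall i j, (0 < Nj j)%N -> k i + kap j != 0)
  (hKK : forall i j, (0 < Nj i)%N -> (0 < Nj j)%N -> kap i + kap j != 0) :
  Gamma k Nj kap *m Mmat k c1 Nj kap cJ aJ p q n m rho0
  + Mmat k c1 Nj kap cJ aJ p q n m rho0 *m Gamma k Nj kap
  = rvec k Nj kap aJ p q n m rho0 *m cvec c1 Nj cJ.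
Proof.
rewrite /Mmat /rvec -Fe -eH.
set A := Amat N1 Nj aJ; set F := Fmat _ _ _ _ _ _ _ _; set G := Gmat k Nj kap.
set H := Hmat c1 Nj cJ; set Ga := Gamma k Nj kap.
have e1 : Ga *m (A *m F *m G *m H) = A *m F *m (Ga *m G) *m H.
  by rewrite !mulmxA GA -(mulmxA A Ga F) GF !mulmxA.
have e2 : A *m F *m G *m H *m Ga = A *m F *m (G *m Ga^T) *m H.
  by rewrite -!mulmxA -GH !mulmxA.
rewrite e1 e2 -mulmxDl -mulmxDr GG //.
by rewrite !mulmxA.
Qed.

Lemma Mshift p q n m rho0
  (hk : forall i, [/\ p - k i != 0, p + k i != 0, q - k i != 0 & q + k i != 0])
  (hj : forall j, (0 < Nj j)%N -> [/\ p - kap j != 0, p + kap j != 0, q - kap j != 0 & q + kap j != 0]) :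
  (p%:M - Gamma k Nj kap) *m Mmat k c1 Nj kap cJ aJ p q (n+1) m rho0
  = (p%:M + Gamma k Nj kap) *m Mmat k c1 Nj kap cJ aJ p q n m rho0
  /\ (p%:M + Gamma k Nj kap) *m rvec k Nj kap aJ p q n m rho0
  = (p%:M - Gamma k Nj kap) *m rvec k Nj kap aJ p q (n+1) m rho0.
Proof.
have [c1' c2'] := commA p.
have fs := FS n m rho0 hk hj.
split.
  by rewrite /Mmat !mulmxA -c1' -(mulmxA (Amat _ _ _)) fs !mulmxA c2'.
by rewrite /rvec -!Fe !mulmxA -c2' -c1' -!(mulmxA (Amat _ _ _)) fs.
Qed.

Lemma Fmat_sym p q n m rho0 : Fmat k Nj kap p q n m rho0 = Fmat k Nj kap q p m n rho0.
Proof.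
rewrite /Fmat; congr block_mx.
  by congr diag_mx; apply/rowP => i; rewrite !mxE rho_sym.
by apply/eq_mxdiag => j; rewrite /FJ rho_taylor_sym.
Qed.

Lemma Mmat_sym p q n m rho0 : Mmat k c1 Nj kap cJ aJ p q n m rho0 = Mmat k c1 Nj kap cJ aJ q p m n rho0.
Proof. by rewrite /Mmat Fmat_sym. Qed.

Lemma rvec_sym p q n m rho0 : rvec k Nj kap aJ p q n m rho0 = rvec k Nj kap aJ q p m n rho0.
Proof. by rewrite /rvec -!Fe Fmat_sym. Qed.

End Main.

Unset Implicit Arguments. Set Strict Implicit. Set Printing Implicit Defensive.
Theorem mainTheorem8 (C : numClosedFieldType) (p q rho0 : C)
  (N1 : nat) (k c1 : 'I_N1 -> C)
  (s : nat) (Nj : 'I_s -> nat) (kap : 'I_s -> C) (cJ aJ : 'I_s -> nat -> C)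
  (Heig : forall lam mu : C,
      eigenvalue (Gamma k Nj kap) lam -> eigenvalue (Gamma k Nj kap) mu ->
      lam + mu != 0)
  (Hpq : forall lam : C, eigenvalue (Gamma k Nj kap) lam ->
      [/\ p != lam, p != - lam, q != lam & q != - lam])
  (Hinv : forall n m : int,
      1%:M + Mmat k c1 Nj kap cJ aJ p q n m rho0 \in unitmx) :
  let w := wsol k c1 Nj kap cJ aJ p q rho0 in
  forall n m : int,
    (p + q + w n m - w (n + 1) (m + 1)) * (p - q + w n (m + 1) - w (n + 1) m)
    = p ^+ 2 - q ^+ 2.
Proof.
have cv : forall lam, eigenvalue (Gamma k Nj kap) lam ->
   [/\ p - lam != 0, p + lam != 0, q - lam != 0 & q + lam != 0]
   /\ [/\ q - lam != 0, q + lam != 0, p - lam != 0 & p + lam != 0].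
  move=> lam /Hpq [h1 h2 h3 h4].
  by rewrite !subr_eq0 !addr_eq0 h1 h2 h3 h4.
have hkp : forall i, _ := fun i => (cv _ (eig_k k Nj kap i)).1.
have hkq : forall i, _ := fun i => (cv _ (eig_k k Nj kap i)).2.
have hjp : forall j, (0 < Nj j)%N -> _ := fun j h => (cv _ (eig_kap k kap h)).1.
have hjq : forall j, (0 < Nj j)%N -> _ := fun j h => (cv _ (eig_kap k kap h)).2.
have hkk : forall i j, k i + k j != 0 by move=> i j; apply: Heig; apply: eig_k.
have hkK : forall i j, (0 < Nj j)%N -> k i + kap j != 0.
  by move=> i j h; apply: Heig; [apply: eig_k | apply: eig_kap].
have hKK : forall i j, (0 < Nj i)%N -> (0 < Nj j)%N -> kap i + kap j != 0.
  by move=> i j hi hj; apply: Heig; apply: eig_kap.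
have S := fun n m => Seq c1 cJ aJ p q n m rho0 hkk hkK hKK.
have P1 : forall n0 m0, (p%:M - Gamma k Nj kap) *m (1%:M + Mmat k c1 Nj kap cJ aJ p q (n0+1) m0 rho0)
   = (1%:M + Mmat k c1 Nj kap cJ aJ p q n0 m0 rho0) *m (p%:M - Gamma k Nj kap)
     + rvec k Nj kap aJ p q n0 m0 rho0 *m cvec c1 Nj cJ.
  move=> n0 m0; have [e _] := Mshift c1 cJ aJ n0 m0 rho0 hkp hjp.
  by have [] := H12 (S n0 m0) (S (n0+1) m0) e.
have P2 : forall n0 m0, (1%:M + Mmat k c1 Nj kap cJ aJ p q (n0+1) m0 rho0) *m (p%:M + Gamma k Nj kap)
   = (p%:M + Gamma k Nj kap) *m (1%:M + Mmat k c1 Nj kap cJ aJ p q n0 m0 rho0)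
     + rvec k Nj kap aJ p q (n0+1) m0 rho0 *m cvec c1 Nj cJ.
  move=> n0 m0; have [e _] := Mshift c1 cJ aJ n0 m0 rho0 hkp hjp.
  by have [] := H12 (S n0 m0) (S (n0+1) m0) e.
have P3 : forall n0 m0, (p%:M + Gamma k Nj kap) *m rvec k Nj kap aJ p q n0 m0 rho0
   = (p%:M - Gamma k Nj kap) *m rvec k Nj kap aJ p q (n0+1) m0 rho0.
  by move=> n0 m0; have [_ e] := Mshift c1 cJ aJ n0 m0 rho0 hkp hjp.
have Q1 : forall n0 m0, (q%:M - Gamma k Nj kap) *m (1%:M + Mmat k c1 Nj kap cJ aJ p q n0 (m0+1) rho0)
   = (1%:M + Mmat k c1 Nj kap cJ aJ p q n0 m0 rho0) *m (q%:M - Gamma k Nj kap)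
     + rvec k Nj kap aJ p q n0 m0 rho0 *m cvec c1 Nj cJ.
  move=> n0 m0; have [e _] := Mshift c1 cJ aJ m0 n0 rho0 hkq hjq.
  rewrite -(Mmat_sym k c1 Nj kap cJ aJ p q n0 (m0+1)) -(Mmat_sym k c1 Nj kap cJ aJ p q n0 m0) in e.
  by have [] := H12 (S n0 m0) (S n0 (m0+1)) e.
have Q2 : forall n0 m0, (1%:M + Mmat k c1 Nj kap cJ aJ p q n0 (m0+1) rho0) *m (q%:M + Gamma k Nj kap)
   = (q%:M + Gamma k Nj kap) *m (1%:M + Mmat k c1 Nj kap cJ aJ p q n0 m0 rho0)
     + rvec k Nj kap aJ p q n0 (m0+1) rho0 *m cvec c1 Nj cJ.
  move=> n0 m0; have [e _] := Mshift c1 cJ aJ m0 n0 rho0 hkq hjq.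
  rewrite -(Mmat_sym k c1 Nj kap cJ aJ p q n0 (m0+1)) -(Mmat_sym k c1 Nj kap cJ aJ p q n0 m0) in e.
  by have [] := H12 (S n0 m0) (S n0 (m0+1)) e.
have Q3 : forall n0 m0, (q%:M + Gamma k Nj kap) *m rvec k Nj kap aJ p q n0 m0 rho0
   = (q%:M - Gamma k Nj kap) *m rvec k Nj kap aJ p q n0 (m0+1) rho0.
  move=> n0 m0; have [_ e] := Mshift c1 cJ aJ m0 n0 rho0 hkq hjq.
  by rewrite -(rvec_sym k Nj kap aJ p q n0 (m0+1)) -(rvec_sym k Nj kap aJ p q n0 m0) in e.
move=> w n m.
exact: (lpkdv_abs Hinv P1 P2 P3 Q1 Q2 Q3 n m).
Qed.
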